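(* Let $V$, $R$, the radius levels $r_1<\dots<r_k=R$, $G_R$ and $G_\alpha$ be as in the context, and let $0<\alpha\le 5\pi/6$. Then for all $u,v\in V$: $u$ and $v$ are connected by a path in $G_\alpha$ if and only if they are connected by a path in $G_R$.
   Context: Let $V$ be a finite set of pairwise distinct points (nodes) in the Euclidean plane, $d$ the Euclidean distance, and $R>0$. Let $G_R=(V,E)$ be the undirected graph with $E=\{\{u,v\}: u\neq v,\ d(u,v)\le R\}$. Fix a finite increasing sequence of radius levels $0<r_1<r_2<\dots<r_k=R$. For $u\in V$ and $1\le i\le k$ let $S_i(u)=\{v\in V\setminus\{u\}: d(u,v)\le r_i\}$. For $0<\alpha<2\pi$, a closed cone of width $\alpha$ with apex $u$ is a set $\{u+t(\cos\varphi,\sin\varphi): t\ge 0,\ \varphi\in[\theta-\alpha/2,\theta+\alpha/2]\}$ for some $\theta$; $\mathrm{cone}(u,\alpha,v)$ denotes the closed cone of width $\alpha$ with apex $u$ bisected by the ray from $u$ through $v$. A finite set $S\subseteq V\setminus\{u\}$ has an $\alpha$-gap (at $u$) if some closed cone of width $\alpha$ with apex $u$ contains no node of $S$ (in particular $\emptyset$ has an $\alpha$-gap). The algorithm CBTC($\alpha$) assigns to each $u$ the index $i_u$ = the least $i\in\{1,\dots,k\}$ such that $S_i(u)$ has no $\alpha$-gap, or $i_u=k$ if there is no such $i$; set $N_\alpha(u)=S_{i_u}(u)$ and $N_\alpha=\{(u,v): v\in N_\alpha(u)\}$. Let $E_\alpha=\{\{u,v\}: (u,v)\in N_\alpha \text{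 or } (v,u)\in N_\alpha\}$ (the symmetric closure of $N_\alpha$) and $G_\alpha=(V,E_\alpha)$. *)

(* Defs.v *)
From Stdlib Require Import Reals Lra List Relations.
Import ListNotations.
Open Scope R_scope.

Definition point := (R * R)%type.

Definition dist (p q : point) : R :=
  sqrt ((fst p - fst q) ^ 2 + (snd p - snd q) ^ 2).

Definition in_cone (u : point) (a th : R) (p : point) : Prop :=
  exists t phi, 0 <= t /\ th - a / 2 <= phi <= th + a / 2 /\
    p = (fst u + t * cos phi, snd u + t * sin phi).

(* S_i(u) : nodes other than u within distance r_i (levels r indexed 1..k) *)
Definition S_lvl (V : list point) (r : nat -> R) (i : nat) (u v : point) : Prop :=
  In v V /\ v <> u /\ dist u v <= r i.

Definition has_gap (S : point -> Prop) (u : point) (a : R) : Prop :=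
  exists th, forall v, S v -> ~ in_cone u a th v.

(* i is the index i_u chosen by CBTC(a) at node u *)
Definition cbtc_index (V : list point) (r : nat -> R) (k : nat) (a : R)
    (u : point) (i : nat) : Prop :=
  ((1 <= i <= k)%nat /\ ~ has_gap (S_lvl V r i u) u a /\
     forall j, (1 <= j < i)%nat -> has_gap (S_lvl V r j u) u a)
  \/ (i = k /\ forall j, (1 <= j <= k)%nat -> has_gap (S_lvl V r j u) u a).

Definition N_alpha (V : list point) (r : nat -> R) (k : nat) (a : R)
    (u v : point) : Prop :=
  exists i, cbtc_index V r k a u i /\ S_lvl V r i u v.

Definition E_alpha (V : list point) (r : nat -> R) (k : nat) (a : R)
    (u v : point) : Prop :=
  N_alpha V r k a u v \/ N_alpha V r k a v u.

Definition E_R (V : list point) (Rmax : R) (u v : point) : Prop :=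
  In u V /\ In v V /\ u <> v /\ dist u v <= Rmax.

Definition connected (V : list point) (E : point -> point -> Prop) (u v : point) : Prop :=
  clos_refl_trans point (fun x y => In x V /\ In y V /\ E x y) u v.

(* Main.v *)
Require Import Defs.
From Stdlib Require Import Reals List Relations.
From Stdlib Require Import Lra Psatz ZArith Classical Arith Lia.
Open Scope R_scope.
Local Notation dist := Defs.dist.


Definition ang (c : point) (b : R) (x : point) : R :=
  let X := (fst x - fst c) * cos b + (snd x - snd c) * sin b in
  let Y := - (fst x - fst c) * sin b + (snd x - snd c) * cos b in
  let r := sqrt (X ^ 2 + Y ^ 2) in
  if Rle_dec 0 Y then acos (X / r) else - acos (X / r).

Lemma cs1 (t : R) : cos t ^ 2 + sin t ^ 2 = 1.
Proof. pose proof (sin2_cos2 t). unfold Rsqr in H. lra. Qed.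

Lemma sq_pos (t : R) : t <> 0 -> 0 < t ^ 2.
Proof. intros H. simpl. rewrite Rmult_1_r. apply (Rsqr_pos_lt t H). Qed.

Lemma dist_pos (c x : point) : x <> c -> 0 < dist c x.
Proof.
  intros H. unfold dist. apply sqrt_lt_R0.
  destruct c as [c1 c2], x as [x1 x2]; simpl.
  destruct (Req_dec x1 c1); destruct (Req_dec x2 c2).
  - subst; exfalso; apply H; reflexivity.
  - assert (0 < (c2 - x2)^2) by (apply sq_pos; lra). nra.
  - assert (0 < (c1 - x1)^2) by (apply sq_pos; lra). nra.
  - assert (0 < (c1 - x1)^2) by (apply sq_pos; lra). nra.
Qed.

Lemma ang_spec (c x : point) (b : R) : x <> c ->
  let p := ang c b x in let a := dist c x in
  0 < a /\ - PI < p <= PI /\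
  fst x - fst c = a * cos (b + p) /\ snd x - snd c = a * sin (b + p).
Proof.
  intros Hne p a.
  assert (Ha : 0 < a) by (apply dist_pos; auto).
  set (qx := fst x - fst c) in *. set (qy := snd x - snd c) in *.
  set (X := qx * cos b + qy * sin b).
  set (Y := - qx * sin b + qy * cos b).
  assert (HXY : X ^ 2 + Y ^ 2 = qx ^ 2 + qy ^ 2).
  { unfold X, Y. pose proof (cs1 b). nra. }
  assert (Hr : sqrt (X ^ 2 + Y ^ 2) = a).
  { rewrite HXY. unfold a, dist, qx, qy. f_equal; ring. }
  assert (Ha2 : a ^ 2 = X ^ 2 + Y ^ 2).
  { rewrite <- Hr. rewrite pow2_sqrt; [lra| nra]. }
  assert (Hz : -1 <= X / a <= 1).
  { split.
    - apply (Rmult_le_reg_r a); [lra|]. unfold Rdiv. rewrite Rmult_assoc, Rinv_l by lra. nra.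
    - apply (Rmult_le_reg_r a); [lra|]. unfold Rdiv. rewrite Rmult_assoc, Rinv_l by lra. nra. }
  assert (HcX : a * cos p = X /\ a * sin p = Y).
  { unfold p, ang. fold qx qy. fold X Y. rewrite Hr.
    assert (Hs : sqrt (1 - (X / a)²) = Rabs Y / a).
    { rewrite <- (sqrt_Rsqr (Rabs Y / a)).
      2:{ unfold Rdiv; apply Rmult_le_pos; [apply Rabs_pos|left; apply Rinv_0_lt_compat; lra]. }
      f_equal. unfold Rsqr.
      replace (Rabs Y / a * (Rabs Y / a)) with ((Rabs Y * Rabs Y) / (a * a)) by (field; lra).
      rewrite <- (Rabs_mult Y Y).
      rewrite Rabs_pos_eq by nra.
      replace (1 - X / a * (X / a)) with ((a * a - X * X) / (a * a)) by (field; lra).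
      f_equal. nra. }
    destruct (Rle_dec 0 Y).
    - rewrite cos_acos, sin_acos by auto. rewrite Hs, Rabs_pos_eq by lra.
      split; field; lra.
    - rewrite cos_neg, sin_neg, cos_acos, sin_acos by auto. rewrite Hs, Rabs_left by lra.
      split; field; lra. }
  destruct HcX as [HcX HsY].
  split; [exact Ha|]. split.
  - unfold p, ang. fold qx qy. fold X Y. rewrite Hr.
    pose proof (acos_bound (X / a)).
    destruct (Rle_dec 0 Y).
    + pose proof PI_RGT_0; lra.
    + destruct (Req_dec (X / a) (-1)) as [E|E].
      * exfalso. assert (X = - a) by (apply (Rmult_eq_reg_r (/ a)); [|apply Rinv_neq_0_compat; lra];
           unfold Rdiv in E; rewrite E; field; lra).
        assert (Y ^ 2 = 0) by nra. assert (Y = 0) by nra. lra.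
      * destruct (Req_dec (X / a) 1) as [E1|E1].
        -- rewrite E1, acos_1. pose proof PI_RGT_0; lra.
        -- assert (-1 < X / a < 1) by lra. pose proof (acos_bound_lt _ H0). lra.
  - rewrite cos_plus, sin_plus. split.
    + replace (a * (cos b * cos p - sin b * sin p)) with (cos b * (a * cos p) - sin b * (a * sin p)) by ring.
      rewrite HcX, HsY. unfold X, Y.
      replace (cos b * (qx * cos b + qy * sin b) - sin b * (- qx * sin b + qy * cos b)) with (qx * (cos b ^ 2 + sin b ^ 2)) by ring.
      rewrite cs1; ring.
    + replace (a * (sin b * cos p + cos b * sin p)) with (sin b * (a * cos p) + cos b * (a * sin p)) by ring.
      rewrite HcX, HsY. unfold X, Y.
      replace (sin b * (qx * cos b + qy * sin b) + cos b * (- qx * sin b + qy * cos b)) with (qy * (cos b ^ 2 + sin b ^ 2)) by ring.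
      rewrite cs1; ring.
Qed.


Lemma cos_sin_eq (p q : R) : cos p = cos q -> sin p = sin q ->
  exists k : Z, p = q + 2 * IZR k * PI.
Proof.
  intros Hc Hs.
  assert (H1 : cos (p - q) = 1).
  { rewrite cos_minus, Hc, Hs. pose proof (cs1 q). nra. }
  rewrite <- (Rmult_1_l (p - q)) in H1.
  replace (1 * (p - q)) with (2 * ((p - q) / 2)) in H1 by field.
  rewrite cos_2a_sin in H1.
  assert (sin ((p - q) / 2) = 0) by nra.
  destruct (sin_eq_0_0 _ H) as [k Hk]. exists k. lra.
Qed.

Lemma cone_ang (c x : point) (b W th : R) : x <> c -> in_cone c W th x ->
  exists k : Z, th - W / 2 <= b + ang c b x + 2 * IZR k * PI <= th + W / 2.
Proof.
  intros Hne [t [phi [Ht [Hphi Hx]]]].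
  destruct (ang_spec c x b Hne) as [Ha [_ [Hx1 Hx2]]].
  set (p := ang c b x) in *. set (a := dist c x) in *.
  rewrite Hx in Hx1, Hx2. simpl in Hx1, Hx2.
  assert (E1 : t * cos phi = a * cos (b + p)) by lra.
  assert (E2 : t * sin phi = a * sin (b + p)) by lra.
  assert (Ht2 : t = a).
  { assert (t ^ 2 = a ^ 2).
    { replace (t ^ 2) with ((t * cos phi) ^ 2 + (t * sin phi) ^ 2)
        by (replace ((t * cos phi) ^ 2 + (t * sin phi) ^ 2) with (t^2 * (cos phi ^ 2 + sin phi ^ 2)) by ring; rewrite cs1; ring).
      rewrite E1, E2.
      replace ((a * cos (b + p)) ^ 2 + (a * sin (b + p)) ^ 2) with (a^2 * (cos (b+p) ^ 2 + sin (b+p) ^ 2)) by ring; rewrite cs1; ring. }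
    nra. }
  subst t.
  assert (Ha0 : a <> 0) by (apply Rgt_not_eq; lra).
  assert (C1 : cos phi = cos (b + p)).
  { apply (Rmult_eq_reg_l a); [|exact Ha0]. lra. }
  assert (C2 : sin phi = sin (b + p)).
  { apply (Rmult_eq_reg_l a); [|exact Ha0]. lra. }
  destruct (cos_sin_eq _ _ C1 C2) as [k Hk].
  exists k. lra.
Qed.


Lemma list_min {T} (l : list T) (P : T -> Prop) (f : T -> R) :
  (exists x, In x l /\ P x) ->
  exists x0, In x0 l /\ P x0 /\ forall x, In x l -> P x -> f x0 <= f x.
Proof.
  induction l as [|y l IH]; intros [x [Hx HP]]; [destruct Hx|].
  destruct (classic (exists x, In x l /\ P x)) as [Hl|Hl].
  - destruct (IH Hl) as [x0 [H0 [HP0 Hm]]].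
    destruct (classic (P y)) as [Py|Py].
    + destruct (Rle_dec (f y) (f x0)).
      * exists y. split; [left; auto|]. split; auto.
        intros z [<-|Hz] Pz; [lra|]. specialize (Hm z Hz Pz); lra.
      * exists x0. split; [right; auto|]. split; auto.
        intros z [<-|Hz] Pz; [lra|]. auto.
    + exists x0. split; [right; auto|]. split; auto.
      intros z [<-|Hz] Pz; [contradiction|]. auto.
  - destruct Hx as [->|Hx]; [|exfalso; apply Hl; eauto].
    exists x. split; [left; auto|]. split; auto.
    intros z [<-|Hz] Pz; [lra|]. exfalso; apply Hl; eauto.
Qed.

Lemma list_eps {T} (l : list T) (P : T -> Prop) (Q : T -> R -> Prop) :
  (forall x e e', Q x e -> 0 < e' <= e -> Q x e') ->
  (forall x, In x l -> P x -> exists e, 0 < e /\ Q x e) ->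
  exists e, 0 < e /\ forall x, In x l -> P x -> Q x e.
Proof.
  intros Hmon. induction l as [|y l IH]; intros H.
  - exists 1. split; [lra|]. intros x [].
  - destruct IH as [e [He Hq]]. { intros x Hx Px. apply H; auto. right; auto. }
    destruct (classic (P y)) as [Py|Py].
    + destruct (H y (or_introl eq_refl) Py) as [e1 [He1 Hq1]].
      exists (Rmin e e1). split; [apply Rmin_glb_lt; auto|].
      intros x [<-|Hx] Px.
      * apply (Hmon _ e1); auto. split; [apply Rmin_glb_lt; auto|apply Rmin_r].
      * apply (Hmon _ e); auto. split; [apply Rmin_glb_lt; auto|apply Rmin_l].
    + exists e. split; auto. intros x [<-|Hx] Px; [contradiction|auto].
Qed.

Lemma per_eps (z g h : R) : 0 < h < PI ->
  ~ (exists k : Z, g - 2 * h <= z + 2 * IZR k * PI < g) ->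
  exists e, 0 < e /\ forall e', 0 < e' <= e -> forall k : Z,
    ~ (g - 2 * h - e' <= z + 2 * IZR k * PI <= g - e').
Proof.
  intros [Hh HhP] Hn. pose proof PI_RGT_0 as HPI.
  set (r0 := (g - 2 * h - z) / (2 * PI)).
  destruct (archimed r0) as [A1 A2].
  set (ks := up r0) in *.
  assert (B1 : 2 * IZR ks * PI > g - 2 * h - z).
  { unfold r0 in A1. apply (Rmult_lt_compat_r (2 * PI)) in A1; [|lra].
    unfold Rdiv in A1. rewrite Rmult_assoc, Rinv_l in A1 by lra. lra. }
  assert (B2 : 2 * IZR ks * PI <= g - 2 * h - z + 2 * PI).
  { assert (IZR ks <= r0 + 1) by lra.
    apply (Rmult_le_compat_r (2 * PI)) in H; [|lra].
    unfold r0 in H. unfold Rdiv in H.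
    replace ((g - 2 * h - z) * / (2 * PI) + 1) with (((g - 2 * h - z) + 2 * PI) * / (2 * PI)) in H by (field; lra).
    rewrite Rmult_assoc, Rinv_l in H by lra. lra. }
  set (rho := z + 2 * IZR ks * PI).
  assert (R1 : rho >= g).
  { destruct (Rlt_dec rho g); [|apply Rnot_lt_ge; auto]. exfalso. apply Hn. exists ks. unfold rho in *; lra. }
  assert (R2 : rho - 2 * PI < g - 2 * h).
  { destruct (Rlt_dec (rho - 2 * PI) (g - 2 * h)); [auto|]. exfalso. apply Hn.
    exists (ks - 1)%Z. rewrite minus_IZR. unfold rho in *. split; nra. }
  exists ((g - 2 * h - rho + 2 * PI) / 2). split; [lra|].
  intros e' He' k Hk.
  destruct (Z.lt_trichotomy k ks) as [Hlt|[Heq|Hgt]].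
  - assert (IZR k <= IZR ks - 1) by (rewrite <- minus_IZR; apply IZR_le; lia).
    unfold rho in *. nra.
  - subst k. unfold rho in *. lra.
  - assert (IZR k >= IZR ks + 1) by (rewrite <- plus_IZR; apply Rle_ge, IZR_le; lia).
    unfold rho in *. nra.
Qed.

Lemma halfopen {T} (l : list T) (P : T -> Prop) (f : T -> R) (h : R) :
  0 < h < PI ->
  (forall g, exists x, In x l /\ P x /\ exists k : Z, g - h <= f x + 2 * IZR k * PI <= g + h) ->
  forall g, exists x, In x l /\ P x /\ exists k : Z, g - 2 * h <= f x + 2 * IZR k * PI < g.
Proof.
  intros Hh Hng g. apply NNPP. intros Hn.
  destruct (list_eps l P (fun x e => forall e', 0 < e' <= e -> forall k : Z,
    ~ (g - 2 * h - e' <= f x + 2 * IZR k * PI <= g - e'))) as [e [He Hq]].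
  - intros x e e' H1 H2 e'' H3. apply H1. lra.
  - intros x Hx Px. apply per_eps; auto. intros [k Hk]. apply Hn. exists x. eauto.
  - destruct (Hng (g - h - e)) as [x [Hx [Px [k Hk]]]].
    apply (Hq x Hx Px e (conj He (Rle_refl e)) k). lra.
Qed.

Lemma halfopen' {T} (l : list T) (P : T -> Prop) (f : T -> R) (h : R) :
  0 < h < PI ->
  (forall g, exists x, In x l /\ P x /\ exists k : Z, g - h <= f x + 2 * IZR k * PI <= g + h) ->
  forall g, exists x, In x l /\ P x /\ exists k : Z, g < f x + 2 * IZR k * PI <= g + 2 * h.
Proof.
  intros Hh Hng g.
  destruct (halfopen l P (fun x => - f x) h Hh) with (g := - g) as [x [Hx [Px [k Hk]]]].
  - intros g'. destruct (Hng (- g')) as [x [Hx [Px [k Hk]]]].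
    exists x. split; auto. split; auto. exists (- k)%Z. rewrite opp_IZR. lra.
  - exists x. split; auto. split; auto. exists (- k)%Z. rewrite opp_IZR. lra.
Qed.


Lemma mul_neg_r (x y z : R) : z <= 0 -> y <= x -> x * z <= y * z.
Proof. intros. nra. Qed.

Lemma pair_poly (a b c1 s1 c2 s2 cs ss : R) :
  0 < a < 1 -> 0 < b < 1 -> a * a - 2 * a * c1 >= 0 -> b * b - 2 * b * c2 >= 0 ->
  0 < c1 -> 0 < c2 -> 0 <= s1 -> 0 <= s2 -> c1 * c1 + s1 * s1 = 1 -> c2 * c2 + s2 * s2 = 1 ->
  cs = c1 * c2 - s1 * s2 -> cs <= - 1 / 2 -> ss >= 1 / 2 ->
  c2 = cs * c1 + ss * s1 -> c1 = cs * c2 + ss * s2 ->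
  a * a + b * b - 2 * a * c1 - 2 * b * c2 + 2 * a * b * cs < 0.
Proof.
  intros Ha Hb Fa Fb Hc1 Hc2 Hs1 Hs2 E1 E2 Ecs Hcs Hss Q1 Q2.
  assert (ha : a >= 2 * c1).
  { destruct (Rge_dec a (2 * c1)); auto. assert (a * (a - 2 * c1) < 0) by (apply Rmult_pos_neg; lra). nra. }
  assert (hb : b >= 2 * c2).
  { destruct (Rge_dec b (2 * c2)); auto. assert (b * (b - 2 * c2) < 0) by (apply Rmult_pos_neg; lra). nra. }
  assert (e1 : c1 + s1 >= 1) by nra.
  assert (e2 : c2 + s2 >= 1) by nra.
  assert (K01 : 1 - 2 * c2 + 4 * c1 * cs <= 0).
  { rewrite Q1. assert (2 * c1 * cs <= - c1) by nra. assert (2 * ss * s1 >= s1) by nra. nra. }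
  assert (K10 : 1 - 2 * c1 + 4 * c2 * cs <= 0).
  { rewrite Q2. assert (2 * c2 * cs <= - c2) by nra. assert (2 * ss * s2 >= s2) by nra. nra. }
  assert (c1 <= 1) by nra. assert (c2 <= 1) by nra.
  assert (K11 : 1 - c1 - c2 + cs <= 0).
  { rewrite Ecs. assert ((1 - c1) * (1 - c2) <= s1 * s2).
    { apply Rmult_le_compat; lra. } nra. }
  set (g := a + b - 2 * c1 - 2 * c2 + 2 * a * b * cs).
  assert (Hfg : a * a + b * b - 2 * a * c1 - 2 * b * c2 + 2 * a * b * cs <= g).
  { unfold g. assert ((a - 2 * c1) * (a - 1) <= 0) by nra. nra. }
  enough (g < 0) by lra. unfold g.
  destruct (Rlt_dec 0 (1 + 2 * b * cs)) as [P1|P1].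
  - assert (a * (1 + 2 * b * cs) < 1 * (1 + 2 * b * cs)) by (apply Rmult_lt_compat_r; lra).
    assert (b * (1 + 2 * cs) <= 2 * c2 * (1 + 2 * cs)) by (apply mul_neg_r; lra).
    nra.
  - assert (a * (1 + 2 * b * cs) <= 2 * c1 * (1 + 2 * b * cs)) by (apply mul_neg_r; lra).
    destruct (Rlt_dec 0 (1 + 4 * c1 * cs)) as [P2|P2].
    + assert (b * (1 + 4 * c1 * cs) < 1 * (1 + 4 * c1 * cs)) by (apply Rmult_lt_compat_r; lra).
      nra.
    + assert (b * (1 + 4 * c1 * cs) <= 2 * c2 * (1 + 4 * c1 * cs)) by (apply mul_neg_r; lra).
      assert (0 < c1 * c2) by nra. nra.
Qed.

Lemma pair_trig (a b d t1 t2 : R) :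
  0 < d -> 0 < a < d -> 0 < b < d ->
  a * a - 2 * a * d * cos t1 >= 0 -> b * b - 2 * b * d * cos t2 >= 0 ->
  PI / 3 < t1 -> PI / 3 < t2 -> t1 + t2 <= 5 * PI / 6 ->
  a * a + b * b + d * d - 2 * a * d * cos t1 - 2 * b * d * cos t2 + 2 * a * b * cos (t1 + t2) < d * d.
Proof.
  intros Hd Ha Hb Fa Fb H1 H2 H12. pose proof PI_RGT_0 as HPI.
  assert (c1p : 0 < cos t1) by (apply cos_gt_0; lra).
  assert (c2p : 0 < cos t2) by (apply cos_gt_0; lra).
  assert (s1p : 0 <= sin t1) by (apply sin_ge_0; lra).
  assert (s2p : 0 <= sin t2) by (apply sin_ge_0; lra).
  assert (Hcs : cos (t1 + t2) <= - 1 / 2).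
  { assert (cos (t1 + t2) < cos (PI - PI / 3)) by (apply cos_decreasing_1; lra).
    rewrite Rtrigo_facts.cos_pi_minus, cos_PI3 in H. lra. }
  assert (Hss : sin (t1 + t2) >= 1 / 2).
  { rewrite <- sin_PI_x. rewrite <- sin_PI6. apply Rle_ge, sin_incr_1; lra. }
  assert (Q1 : cos t2 = cos (t1 + t2) * cos t1 + sin (t1 + t2) * sin t1).
  { rewrite <- cos_minus. f_equal. ring. }
  assert (Q2 : cos t1 = cos (t1 + t2) * cos t2 + sin (t1 + t2) * sin t2).
  { rewrite <- cos_minus. f_equal. ring. }
  pose proof (cs1 t1) as E1. pose proof (cs1 t2) as E2.
  set (a' := a / d). set (b' := b / d).
  assert (Ea : a = a' * d) by (unfold a'; field; lra).
  assert (Eb : b = b' * d) by (unfold b'; field; lra).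
  assert (Ha' : 0 < a' < 1).
  { rewrite Ea in Ha. split; nra. }
  assert (Hb' : 0 < b' < 1).
  { rewrite Eb in Hb. split; nra. }
  assert (Fa' : a' * a' - 2 * a' * cos t1 >= 0).
  { rewrite Ea in Fa. assert (d * d * (a' * a' - 2 * a' * cos t1) >= 0) by nra.
    assert (0 < d * d) by nra. nra. }
  assert (Fb' : b' * b' - 2 * b' * cos t2 >= 0).
  { rewrite Eb in Fb. assert (d * d * (b' * b' - 2 * b' * cos t2) >= 0) by nra.
    assert (0 < d * d) by nra. nra. }
  pose proof (pair_poly a' b' (cos t1) (sin t1) (cos t2) (sin t2) (cos (t1 + t2)) (sin (t1 + t2))
    Ha' Hb' Fa' Fb' c1p c2p s1p s2p ltac:(simpl in E1; lra) ltac:(simpl in E2; lra)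
    (cos_plus t1 t2) Hcs Hss Q1 Q2) as P.
  rewrite Ea, Eb.
  assert (0 < d * d) by nra.
  assert (d * d * (a' * a' + b' * b' - 2 * a' * cos t1 - 2 * b' * cos t2 + 2 * a' * b' * cos (t1 + t2)) < 0) by nra.
  nra.
Qed.


Definition sqd (p q : point) : R := (fst p - fst q) ^ 2 + (snd p - snd q) ^ 2.

Lemma sqd_nonneg (p q : point) : 0 <= sqd p q.
Proof. unfold sqd. apply Rplus_le_le_0_compat; apply pow2_ge_0. Qed.

Lemma dist_lt (p q : point) (d : R) : 0 < d -> sqd p q < d * d -> dist p q < d.
Proof.
  intros Hd H. unfold dist. fold (sqd p q). rewrite <- (sqrt_square d) by lra.
  apply sqrt_lt_1; [apply sqd_nonneg | nra | exact H].
Qed.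

Lemma dist_ge (p q : point) (d : R) : 0 <= d -> dist p q >= d -> sqd p q >= d * d.
Proof.
  intros Hd H. unfold dist in H. fold (sqd p q) in H.
  pose proof (sqd_nonneg p q).
  pose proof (sqrt_sqrt _ H0). nra.
Qed.

Lemma dist_sym (p q : point) : dist p q = dist q p.
Proof. unfold dist. f_equal. ring. Qed.

Lemma alg3 (cb sb c1 s1 c2 s2 a b d : R) : cb ^ 2 + sb ^ 2 = 1 -> c1 ^ 2 + s1 ^ 2 = 1 -> c2 ^ 2 + s2 ^ 2 = 1 ->
  (a * (cb * c1 - sb * s1) - d * cb + b * (cb * c2 - sb * s2)) ^ 2 +
  (a * (sb * c1 + cb * s1) - d * sb + b * (sb * c2 + cb * s2)) ^ 2 =
  a * a + b * b + d * d - 2 * a * d * c1 - 2 * b * d * c2 + 2 * a * b * (c1 * c2 + s1 * s2).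
Proof.
  intros Hb H1 H2.
  replace ((a * (cb * c1 - sb * s1) - d * cb + b * (cb * c2 - sb * s2)) ^ 2 +
  (a * (sb * c1 + cb * s1) - d * sb + b * (sb * c2 + cb * s2)) ^ 2) with
  ((cb ^ 2 + sb ^ 2) * ((a * c1 - d + b * c2) ^ 2 + (a * s1 + b * s2) ^ 2)) by ring.
  rewrite Hb.
  replace (1 * ((a * c1 - d + b * c2) ^ 2 + (a * s1 + b * s2) ^ 2)) with
   (a * a * (c1 ^ 2 + s1 ^ 2) + b * b * (c2 ^ 2 + s2 ^ 2) + d * d - 2 * a * d * c1 - 2 * b * d * c2 + 2 * a * b * (c1 * c2 + s1 * s2)) by ring.
  rewrite H1, H2. ring.
Qed.

Lemma cos_abs (t : R) : cos (Rabs t) = cos t.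
Proof. destruct (Rle_dec 0 t); [rewrite Rabs_pos_eq by lra; auto| rewrite Rabs_left by lra; apply cos_neg]. Qed.

Lemma half_lemma (V : list point) (Pp : point -> Prop) (P Q y : point) (d b0 b1 : R) :
  0 < d ->
  fst Q - fst P = d * cos b0 -> snd Q - snd P = d * sin b0 ->
  cos b1 = - cos b0 -> sin b1 = - sin b0 ->
  (forall x, Pp x -> In x V /\ x <> P /\ dist P x < d /\ dist x Q >= d) ->
  (forall th, exists x, Pp x /\ in_cone P (5 * PI / 6) th x) ->
  y <> Q -> dist Q y < d -> dist y P >= d ->
  (forall x, Pp x -> Rabs (ang Q b1 y) <= Rabs (ang P b0 x)) ->
  exists x, Pp x /\ dist x y < d.
Proof.
  intros Hd HQ1 HQ2 Hb1 Hb2 HPp Hng Hy Hyd Hyf Hmin.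
  pose proof PI_RGT_0 as HPI.
  destruct (ang_spec Q y b1 Hy) as [Hb [[Hp2a Hp2b] [Ey1 Ey2]]].
  set (p2 := ang Q b1 y) in *. set (b := dist Q y) in *.
  pose proof (cs1 b0) as Cb0.
  assert (Fy : b * b - 2 * b * d * cos p2 >= 0).
  { pose proof (dist_ge y P d ltac:(lra) Hyf) as G. unfold sqd in G.
    replace (fst y - fst P) with (- ((0 * (cos b0 * cos p2 - sin b0 * sin p2) - d * cos b0 + b * (cos b0 * cos p2 - sin b0 * sin p2))))  in G
      by (replace (fst y - fst P) with ((fst Q - fst P) + (fst y - fst Q)) by ring; rewrite HQ1, Ey1, cos_plus, Hb1, Hb2; ring).
    replace (snd y - snd P) with (- ((0 * (sin b0 * cos p2 + cos b0 * sin p2) - d * sin b0 + b * (sin b0 * cos p2 + cos b0 * sin p2))))  in G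
      by (replace (snd y - snd P) with ((snd Q - snd P) + (snd y - snd Q)) by ring; rewrite HQ2, Ey2, sin_plus, Hb1, Hb2; ring).
    rewrite <- !Rsqr_pow2, <- !Rsqr_neg, !Rsqr_pow2 in G.
    rewrite alg3 in G by (apply cs1). lra. }
  set (m := Rabs p2).
  assert (Hm0 : 0 <= m <= PI) by (unfold m; split; [apply Rabs_pos| apply Rabs_le; lra]).
  assert (Hcm : cos m = cos p2) by apply cos_abs.
  assert (Hm1 : PI / 3 < m).
  { destruct (Rlt_dec (PI / 3) m); auto. exfalso.
    assert (cos (PI / 3) <= cos m).
    { destruct (Req_dec m (PI / 3)) as [E|E]; [rewrite E; lra|].
      left. apply cos_decreasing_1; lra. }
    rewrite cos_PI3, Hcm in H.
    assert (b >= 2 * d * cos p2) by nra. nra. }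
  assert (Hcl : forall g, exists x, In x V /\ Pp x /\ exists k : Z,
      g - 5 * PI / 12 <= ang P b0 x + 2 * IZR k * PI <= g + 5 * PI / 12).
  { intros g. destruct (Hng (b0 + g)) as [x [Px Hc]].
    destruct (HPp x Px) as [Hin [Hne _]].
    destruct (cone_ang P x b0 _ _ Hne Hc) as [k Hk].
    exists x. split; auto. split; auto. exists k. lra. }
  assert (Hh : 0 < 5 * PI / 12 < PI) by lra.
  (* find x with opposite sign angle *)
  assert (Hex : exists x, Pp x /\ exists t1, m <= t1 <= 5 * PI / 6 - m /\
     cos (ang P b0 x) = cos t1 /\ cos (ang P b0 x - p2) = cos (t1 + m)).
  { destruct (Rle_dec 0 p2) as [Hp|Hp].
    - destruct (halfopen V Pp (ang P b0) _ Hh Hcl m) as [x [Hin [Px [k Hk]]]].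
      destruct (HPp x Px) as [_ [Hne _]].
      destruct (ang_spec P x b0 Hne) as [_ [[Hp1a Hp1b] _]].
      set (p1 := ang P b0 x) in *.
      assert (IZR k < 1) by nra. assert (-1 < IZR k) by nra.
      assert (k = 0%Z) by (apply one_IZR_lt1; lra). subst k.
      assert (Hmm : m <= Rabs p1) by (apply Hmin; auto).
      assert (p1 < 0).
      { destruct (Rlt_dec p1 0); auto. rewrite Rabs_pos_eq in Hmm by lra. simpl in Hk. lra. }
      rewrite Rabs_left in Hmm by lra.
      exists x. split; auto. exists (- p1). simpl in Hk. split; [lra|]. split.
      + rewrite cos_neg. auto.
      + unfold m. rewrite Rabs_pos_eq by lra. replace (- p1 + p2) with (- (p1 - p2)) by ring. rewrite cos_neg. reflexivity.
    - destruct (halfopen' V Pp (ang P b0) _ Hh Hcl (- m)) as [x [Hin [Px [k Hk]]]].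
      destruct (HPp x Px) as [_ [Hne _]].
      destruct (ang_spec P x b0 Hne) as [_ [[Hp1a Hp1b] _]].
      set (p1 := ang P b0 x) in *.
      assert (IZR k < 1) by nra. assert (-1 < IZR k) by nra.
      assert (k = 0%Z) by (apply one_IZR_lt1; lra). subst k.
      assert (Hmm : m <= Rabs p1) by (apply Hmin; auto).
      assert (0 < p1).
      { destruct (Rlt_dec 0 p1); auto. rewrite Rabs_left1 in Hmm by lra. simpl in Hk. lra. }
      rewrite Rabs_pos_eq in Hmm by lra.
      exists x. split; auto. exists p1. simpl in Hk. split; [lra|]. split.
      + auto.
      + unfold m. rewrite Rabs_left by lra. f_equal; ring. }
  destruct Hex as [x [Px [t1 [Ht1 [Ec1 Ec12]]]]].
  destruct (HPp x Px) as [_ [Hne [Hxd Hxf]]].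
  destruct (ang_spec P x b0 Hne) as [Ha [_ [Ex1 Ex2]]].
  set (p1 := ang P b0 x) in *. set (a := dist P x) in *.
  assert (Fx : a * a - 2 * a * d * cos p1 >= 0).
  { pose proof (dist_ge x Q d ltac:(lra) Hxf) as G. unfold sqd in G.
    replace (fst x - fst Q) with (a * (cos b0 * cos p1 - sin b0 * sin p1) - d * cos b0 + 0 * (cos b0 * cos p1 - sin b0 * sin p1)) in G
      by (replace (fst x - fst Q) with ((fst x - fst P) - (fst Q - fst P)) by ring; rewrite HQ1, Ex1, cos_plus; ring).
    replace (snd x - snd Q) with (a * (sin b0 * cos p1 + cos b0 * sin p1) - d * sin b0 + 0 * (sin b0 * cos p1 + cos b0 * sin p1)) in G
      by (replace (snd x - snd Q) with ((snd x - snd P) - (snd Q - snd P)) by ring; rewrite HQ2, Ex2, sin_plus; ring).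
    rewrite alg3 in G by (apply cs1). lra. }
  exists x. split; auto.
  apply dist_lt; auto. unfold sqd.
  replace (fst x - fst y) with (a * (cos b0 * cos p1 - sin b0 * sin p1) - d * cos b0 + b * (cos b0 * cos p2 - sin b0 * sin p2))
    by (replace (fst x - fst y) with ((fst x - fst P) - (fst Q - fst P) - (fst y - fst Q)) by ring;
        rewrite HQ1, Ex1, Ey1, !cos_plus, Hb1, Hb2; ring).
  replace (snd x - snd y) with (a * (sin b0 * cos p1 + cos b0 * sin p1) - d * sin b0 + b * (sin b0 * cos p2 + cos b0 * sin p2))
    by (replace (snd x - snd y) with ((snd x - snd P) - (snd Q - snd P) - (snd y - snd Q)) by ring;
        rewrite HQ2, Ex2, Ey2, !sin_plus, Hb1, Hb2; ring).
  rewrite alg3 by (apply cs1). rewrite <- cos_minus, Ec12, Ec1.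
  rewrite Ec1 in Fx. rewrite <- Hcm.
  rewrite <- Hcm in Fy. apply (pair_trig a b d t1 m); auto; lra.
Qed.


Lemma main_geo (V : list point) (Pu Pv : point -> Prop) (u v : point) :
  u <> v ->
  (forall x, Pu x -> In x V /\ x <> u /\ dist u x < dist u v) ->
  (forall th, exists x, Pu x /\ in_cone u (5 * PI / 6) th x) ->
  (forall y, Pv y -> In y V /\ y <> v /\ dist v y < dist u v) ->
  (forall th, exists y, Pv y /\ in_cone v (5 * PI / 6) th y) ->
  (exists x, Pu x /\ dist x v < dist u v) \/ (exists y, Pv y /\ dist y u < dist u v) \/
  (exists x y, Pu x /\ Pv y /\ dist x y < dist u v).
Proof.
  intros Huv HPu Hgu HPv Hgv.
  set (d := dist u v) in *.
  destruct (classic (exists x, Pu x /\ dist x v < d)) as [H1|H1]; [left; auto|].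
  destruct (classic (exists y, Pv y /\ dist y u < d)) as [H2|H2]; [right; left; auto|].
  right; right.
  assert (Fu : forall x, Pu x -> dist x v >= d).
  { intros x Px. apply Rnot_lt_ge. intros H. apply H1. eauto. }
  assert (Fv : forall y, Pv y -> dist y u >= d).
  { intros y Py. apply Rnot_lt_ge. intros H. apply H2. eauto. }
  assert (Hvu : v <> u) by auto.
  destruct (ang_spec u v 0 Hvu) as [Hd [_ [E1 E2]]].
  fold d in Hd, E1, E2.
  set (b0 := 0 + ang u 0 v) in *.
  set (b1 := b0 + PI).
  assert (C1 : cos b1 = - cos b0) by apply neg_cos.
  assert (C2 : sin b1 = - sin b0) by apply neg_sin.
  destruct (list_min V Pu (fun x => Rabs (ang u b0 x))) as [x0 [Hx0 [Px0 Mx0]]].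
  { destruct (Hgu 0) as [x [Px _]]. exists x. split; [apply HPu|]; auto. }
  destruct (list_min V Pv (fun y => Rabs (ang v b1 y))) as [y0 [Hy0 [Py0 My0]]].
  { destruct (Hgv 0) as [y [Py _]]. exists y. split; [apply HPv|]; auto. }
  destruct (Rle_dec (Rabs (ang v b1 y0)) (Rabs (ang u b0 x0))) as [Hc|Hc].
  - destruct (half_lemma V Pu u v y0 d b0 b1) as [x [Px Hx]]; auto.
    + intros x Px. destruct (HPu x Px) as [? [? ?]]. repeat split; auto.
    + apply HPv; auto.
    + apply HPv; auto.
    + intros x Px. specialize (Mx0 x (proj1 (HPu x Px)) Px). simpl in Mx0. lra.
    + exists x, y0. auto.
  - destruct (half_lemma V Pv v u x0 d b1 b0) as [y [Py Hy]]; auto.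
    + unfold b1. rewrite neg_cos. lra.
    + unfold b1. rewrite neg_sin. lra.
    + lra.
    + lra.
    + intros y Py. destruct (HPv y Py) as [? [? ?]]. repeat split; auto.
    + apply HPu; auto.
    + apply HPu; auto.
    + intros y Py. specialize (My0 y (proj1 (HPv y Py)) Py). simpl in My0. lra.
    + exists x0, y. split; auto. split; auto. rewrite dist_sym. auto.
Qed.


Lemma conn_sym (V : list point) (E : point -> point -> Prop) :
  (forall x y, E x y -> E y x) -> forall x y, connected V E x y -> connected V E y x.
Proof.
  intros HE x y H. unfold connected in *. induction H.
  - apply rt_step. destruct H as [? [? ?]]. auto.
  - apply rt_refl.
  - eapply rt_trans; eauto.
Qed.

Lemma conn_mono (V : list point) (E1 E2 : point -> point -> Prop) :
  (forall x y, In x V -> In y V -> E1 x y -> E2 x y) ->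
  forall x y, connected V E1 x y -> connected V E2 x y.
Proof.
  intros HE x y H. unfold connected in *. induction H.
  - apply rt_step. destruct H as [? [? ?]]. auto.
  - apply rt_refl.
  - eapply rt_trans; eauto.
Qed.

Lemma filter_lt {A} (l : list A) (f g : A -> bool) :
  (forall a, In a l -> f a = true -> g a = true) ->
  (exists a, In a l /\ f a = false /\ g a = true) ->
  (length (filter f l) < length (filter g l))%nat.
Proof.
  induction l as [|b l IH]; intros H1 [a [Ha [Hf Hg]]]; [destruct Ha|].
  assert (Hle : forall l', (forall a, In a l' -> f a = true -> g a = true) ->
             (length (filter f l') <= length (filter g l'))%nat).
  { induction l' as [|c l' IH']; intros H; simpl; [lia|].
    destruct (f c) eqn:Ef.
    - rewrite (H c (or_introl eq_refl) Ef). simpl.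
      assert (length (filter f l') <= length (filter g l'))%nat by (apply IH'; intros; apply H; auto; right; auto). lia.
    - destruct (g c); simpl; [|apply IH'; intros; apply H; auto; right; auto].
      assert (length (filter f l') <= length (filter g l'))%nat by (apply IH'; intros; apply H; auto; right; auto). lia. }
  simpl. destruct Ha as [->|Ha].
  - rewrite Hf, Hg. simpl.
    assert (length (filter f l) <= length (filter g l))%nat by (apply Hle; intros; apply H1; auto; right; auto). lia.
  - assert (length (filter f l) < length (filter g l))%nat.
    { apply IH; [intros; apply H1; auto; right; auto|]. exists a; auto. }
    destruct (f b) eqn:Ef.
    + rewrite (H1 b (or_introl eq_refl) Ef). simpl. lia.
    + destruct (g b); simpl; lia.
Qed.

Definition mu (V : list point) (x y : point) : nat :=
  length (filter (fun pq : point * point => if Rlt_dec (dist (fst pq) (snd pq)) (dist x y) then true else false)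
    (list_prod V V)).

Lemma mu_lt (V : list point) (x y x' y' : point) : In x' V -> In y' V ->
  dist x' y' < dist x y -> (mu V x' y' < mu V x y)%nat.
Proof.
  intros Hx Hy Hd. unfold mu. apply filter_lt.
  - intros [p q] _. simpl. destruct (Rlt_dec (dist p q) (dist x' y')); [|discriminate].
    destruct (Rlt_dec (dist p q) (dist x y)); auto. lra.
  - exists (x', y'). split; [apply in_prod; auto|]. simpl.
    destruct (Rlt_dec (dist x' y') (dist x' y')); [lra|].
    destruct (Rlt_dec (dist x' y') (dist x y)); [auto|lra].
Qed.

Lemma r_mono (k : nat) (r : nat -> R) :
  (forall i, (1 <= i < k)%nat -> r i < r (S i)) ->
  forall i, (1 <= i <= k)%nat -> r i <= r k.
Proof.
  intros Hr.
  assert (forall n i, (1 <= i)%nat -> (i + n <= k)%nat -> r i <= r (i + n)%nat).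
  { induction n as [|n IH]; intros i H1 H2.
    - rewrite Nat.add_0_r. lra.
    - rewrite Nat.add_succ_r. specialize (IH i H1 ltac:(lia)).
      specialize (Hr (i + n)%nat ltac:(lia)). lra. }
  intros i Hi. assert (r i <= r (i + (k - i))%nat) by (apply H; lia).
  replace (i + (k - i))%nat with k in H0 by lia. exact H0.
Qed.

Lemma cbtc_exists (V : list point) (r : nat -> R) (k : nat) (a : R) (u : point) :
  (1 <= k)%nat -> exists i, cbtc_index V r k a u i.
Proof.
  intros Hk.
  assert (forall n, (forall j, (1 <= j <= n)%nat -> has_gap (S_lvl V r j u) u a) \/
     exists i, (1 <= i <= n)%nat /\ ~ has_gap (S_lvl V r i u) u a /\
        forall j, (1 <= j < i)%nat -> has_gap (S_lvl V r j u) u a).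
  { induction n as [|n IH].
    - left. intros j Hj. lia.
    - destruct IH as [IH|[i [Hi [Hg Hj]]]].
      + destruct (classic (has_gap (S_lvl V r (S n) u) u a)) as [G|G].
        * left. intros j Hj. destruct (Nat.eq_dec j (S n)) as [->|Hne]; auto. apply IH; lia.
        * right. exists (S n). split; [lia|]. split; auto. intros j Hj. apply IH; lia.
      + right. exists i. split; [lia|]. auto. }
  destruct (H k) as [G|[i [Hi [Hg Hj]]]].
  - exists k. right. auto.
  - exists i. left. auto.
Qed.

Lemma cbtc_range (V : list point) (r : nat -> R) (k : nat) (a : R) (u : point) (i : nat) :
  (1 <= k)%nat -> cbtc_index V r k a u i -> (1 <= i <= k)%nat.
Proof. intros Hk [[H _]|[-> _]]; lia. Qed.

Lemma cone_widen (u p : point) (a th : R) : a <= 5 * PI / 6 -> in_cone u a th p -> in_cone u (5 * PI / 6) th p.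
Proof.
  intros Ha [t [phi [Ht [Hphi Hp]]]]. exists t, phi. repeat split; auto; lra.
Qed.



Lemma key (V : list point) (Rmax : R) (k : nat) (r : nat -> R) (a : R) :
  (1 <= k)%nat -> (forall i, (1 <= i < k)%nat -> r i < r (S i)) -> r k = Rmax ->
  0 < a -> a <= 5 * PI / 6 ->
  forall n u v, mu V u v = n -> In u V -> In v V -> u <> v -> dist u v <= Rmax ->
    connected V (E_alpha V r k a) u v.
Proof.
  intros Hk Hr HrK Ha0 Ha.
  intros n. induction n as [n IH] using lt_wf_ind.
  intros u v Hmu Hu Hv Huv Hd.
  set (C := connected V (E_alpha V r k a)).
  assert (Edge : forall x y, In x V -> In y V -> (N_alpha V r k a x y \/ N_alpha V r k a y x) -> C x y).
  { intros x y Hx Hy H. apply rt_step. split; auto. }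
  assert (Csym : forall x y, C x y -> C y x).
  { apply conn_sym. intros x y [H|H]; [right|left]; auto. }
  assert (IH' : forall x y, In x V -> In y V -> x <> y -> dist x y < dist u v -> C x y).
  { intros x y Hx Hy Hxy Hlt. apply (IH (mu V x y)); auto.
    - rewrite <- Hmu. apply mu_lt; auto.
    - lra. }
  destruct (classic (N_alpha V r k a u v \/ N_alpha V r k a v u)) as [HN|HN].
  { apply Edge; auto. }
  assert (Loc : forall p q, In p V -> In q V -> p <> q -> dist p q = dist u v ->
      ~ N_alpha V r k a p q ->
      exists i, cbtc_index V r k a p i /\
        (forall x, S_lvl V r i p x -> In x V /\ x <> p /\ dist p x < dist u v) /\
        (forall th, exists x, S_lvl V r i p x /\ in_cone p (5 * PI / 6) th x)).
  { intros p q Hp Hq Hpq Hdpq HNpq.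
    destruct (cbtc_exists V r k a p Hk) as [i Hi].
    exists i. split; auto.
    destruct Hi as [[Hi1 [Hng Hlow]]|[Hik Hall]].
    - assert (Hri : r i < dist u v).
      { destruct (Rlt_dec (r i) (dist u v)) as [Hl|Hl]; auto. exfalso. apply HNpq.
        exists i. split; [left; auto|]. repeat split; auto. lra. }
      split.
      + intros x [Hx [Hxp Hdx]]. repeat split; auto. lra.
      + intros th. apply NNPP. intros Hn. apply Hng. exists th. intros x Sx Hc.
        apply Hn. exists x. split; auto. apply cone_widen with a; auto.
    - exfalso. apply HNpq. exists i. split; [right; auto|]. subst i.
      repeat split; auto. lra. }
  assert (Hu' : ~ N_alpha V r k a u v) by tauto.
  assert (Hv' : ~ N_alpha V r k a v u) by tauto.
  destruct (Loc u v Hu Hv Huv eq_refl Hu') as [iu [Hiu [Pu Gu]]].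
  destruct (Loc v u Hv Hu (not_eq_sym Huv) (dist_sym v u) Hv') as [iv [Hiv [Pv Gv]]].
  assert (Pv' : forall y, S_lvl V r iv v y -> In y V /\ y <> v /\ dist v y < dist u v) by auto.
  assert (Nu : forall x, S_lvl V r iu u x -> N_alpha V r k a u x) by (intros x Hx; exists iu; auto).
  assert (Nv : forall y, S_lvl V r iv v y -> N_alpha V r k a v y) by (intros y Hy; exists iv; auto).
  destruct (main_geo V (S_lvl V r iu u) (S_lvl V r iv v) u v Huv Pu Gu Pv' Gv)
    as [[x [Sx Hx]]|[[y [Sy Hy]]|[x [y [Sx [Sy Hxy]]]]]].
  - destruct (Pu x Sx) as [Hxv [Hxu Hux]].
    assert (x <> v) by (intros ->; lra).
    apply rt_trans with x.
    + apply Edge; auto.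
    + apply IH'; auto.
  - destruct (Pv y Sy) as [Hyv [Hyu Hvy]].
    assert (y <> u) by (intros ->; rewrite dist_sym in Hvy; lra).
    apply rt_trans with y.
    + apply Csym. apply IH'; auto.
    + apply Edge; auto.
  - destruct (Pu x Sx) as [Hxv [Hxu Hux]].
    destruct (Pv y Sy) as [Hyv [Hyu Hvy]].
    apply rt_trans with x; [apply Edge; auto|].
    apply rt_trans with y; [|apply Edge; auto].
    destruct (classic (x = y)) as [->|Hne]; [apply rt_refl|].
    apply IH'; auto.
Qed.

Theorem theorem1 (V : list point) (Rmax : R) (k : nat) (r : nat -> R) (a : R) :
  NoDup V ->
  0 < Rmax ->
  (1 <= k)%nat ->
  0 < r 1%nat ->
  (forall i, (1 <= i < k)%nat -> r i < r (S i)) ->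
  r k = Rmax ->
  0 < a -> a <= 5 * PI / 6 ->
  forall u v, In u V -> In v V ->
    (connected V (E_alpha V r k a) u v <-> connected V (E_R V Rmax) u v).
Proof.
  intros HND HR Hk Hr1 Hr HrK Ha0 Ha u v Hu Hv. split.
  - apply conn_mono. intros x y Hx Hy [[i [Hi [Hy' [Hyx Hd]]]]|[i [Hi [Hx' [Hxy Hd]]]]].
    + pose proof (cbtc_range _ _ _ _ _ _ Hk Hi). pose proof (r_mono k r Hr i H).
      repeat split; auto. lra.
    + pose proof (cbtc_range _ _ _ _ _ _ Hk Hi). pose proof (r_mono k r Hr i H).
      repeat split; auto. rewrite dist_sym. lra.
  - intros H. unfold connected in H. clear Hu Hv. induction H.
    + destruct H as [Hx [Hy [_ [_ [Hxy Hd]]]]].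
      apply (key V Rmax k r a Hk Hr HrK Ha0 Ha (mu V x y)); auto.
    + apply rt_refl.
    + eapply rt_trans; eauto.
Qed.
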